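(* Let $M$ be a submanifold of the Euclidean space $\mathbb{E}^m$ with induced metric $g$, position vector field $\mathbf{x}=\mathbf{x}^T+\mathbf{x}^N$ (tangential and normal components), and let $\beta,\gamma,\delta$ be smooth functions on $M$. Then $(M,g,\mathbf{x}^T,\beta,\gamma,\delta)$ is a generalized soliton, i.e. $\frac12\mathcal{L}_{\mathbf{x}^T}g+\beta\,\mathrm{Ric}=\gamma g+\delta\,(\mathbf{x}^T)^\flat\otimes(\mathbf{x}^T)^\flat$, if and only if the Ricci tensor of $M$ satisfies $$\beta\,\mathrm{Ric}(X,Y)=(\gamma-1)g(X,Y)+\delta\,g(\mathbf{x}^T,X)g(\mathbf{x}^T,Y)-g(A_{\mathbf{x}^N}X,Y)$$ for all vector fields $X,Y$ tangent to $M$.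
   Context: $A_\zeta$ denotes the shape operator of $M$ in $\mathbb{E}^m$ with respect to a normal vector field $\zeta$, defined by the Weingarten formula $\widetilde\nabla_X\zeta=-A_\zeta X+D_X\zeta$ ($\widetilde\nabla$ the Euclidean connection, $D$ the normal connection). $(\mathbf{x}^T)^\flat=g(\mathbf{x}^T,\cdot)$. *)

(* Defs.v *)
(* Local-coordinate formalization of a submanifold
   of E^m given by a parametrization (immersion) phi : U (open in R^n) -> R^m. *)
From HB Require Import structures.
From mathcomp Require Import all_boot all_order all_algebra.
From mathcomp Require Import all_classical all_reals all_analysis.
Set Implicit Arguments. Unset Strict Implicit. Unset Printing Implicit Defensive.
Import Order.TTheory GRing.Theory Num.Theory.
Import numFieldNormedType.Exports.
Local Open Scope classical_set_scope.
Local Open Scope ring_scope.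

Section Geom.
Variables (R : realType) (n m : nat).

Definition ebas (i : 'I_n) : 'rV[R]_n := delta_mx 0 i.

Definition pd {W : normedModType R} (i : 'I_n) (f : 'rV[R]_n -> W) (u : 'rV[R]_n) : W :=
  'D_(ebas i) f u.

Definition iterD {W : normedModType R} (s : seq 'I_n) (f : 'rV[R]_n -> W) : 'rV[R]_n -> W :=
  foldr (fun i g => pd i g) f s.

Definition smooth_on {W : normedModType R} (U : set 'rV[R]_n) (f : 'rV[R]_n -> W) : Prop :=
  forall (s : seq 'I_n) (i : 'I_n) (u : 'rV[R]_n), U u -> derivable (iterD s f) u (ebas i).

Definition dotv (a b : 'rV[R]_m) : R := \sum_(k < m) a 0 k * b 0 k.

Variable phi : 'rV[R]_n -> 'rV[R]_m.

Definition dphi (i : 'I_n) (u : 'rV[R]_n) : 'rV[R]_m := pd i phi u.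

Definition jac (u : 'rV[R]_n) : 'M[R]_(n, m) := \matrix_(i < n) dphi i u.

Definition gmet (i j : 'I_n) (u : 'rV[R]_n) : R := dotv (dphi i u) (dphi j u).
Definition gmat (u : 'rV[R]_n) : 'M[R]_n := \matrix_(i, j) gmet i j u.
Definition ginv (u : 'rV[R]_n) : 'M[R]_n := invmx (gmat u).

(* coefficients of the tangential part x^T of the position vector x = phi *)
Definition xTc (k : 'I_n) (u : 'rV[R]_n) : R :=
  \sum_(l < n) ginv u k l * dotv (phi u) (dphi l u).
Definition xT (u : 'rV[R]_n) : 'rV[R]_m := \sum_(k < n) xTc k u *: dphi k u.
Definition xN (u : 'rV[R]_n) : 'rV[R]_m := phi u - xT u.

Definition xTflat (i : 'I_n) (u : 'rV[R]_n) : R := dotv (xT u) (dphi i u).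

Definition lieg (i j : 'I_n) (u : 'rV[R]_n) : R :=
  \sum_(k < n) (xTc k u * pd k (gmet i j) u
                + gmet k j u * pd i (xTc k) u
                + gmet i k u * pd j (xTc k) u).

(* g(A_{x^N} d_i, d_j), from Weingarten: A_zeta X = -(tangential part of
   tilde-nabla_X zeta), i.e. g(A_zeta X, Y) = - <tilde-nabla_X zeta, Y> *)
Definition shapeN (i j : 'I_n) (u : 'rV[R]_n) : R :=
  - dotv (pd i xN u) (dphi j u).

Definition chris (k i j : 'I_n) (u : 'rV[R]_n) : R :=
  2^-1 * \sum_(l < n) ginv u k l *
     (pd i (gmet j l) u + pd j (gmet i l) u - pd l (gmet i j) u).

Definition ricci (i j : 'I_n) (u : 'rV[R]_n) : R :=
  \sum_(k < n) (pd k (chris k i j) u - pd j (chris k i k) u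
     + \sum_(p < n) (chris k k p u * chris p i j u - chris k j p u * chris p i k u)).

End Geom.

(* Main.v *)
Require Import Defs.
From HB Require Import structures.
From mathcomp Require Import all_boot all_order all_algebra.
From mathcomp Require Import all_classical all_reals all_analysis.
From mathcomp Require Import ring lra.
Set Implicit Arguments. Unset Strict Implicit. Unset Printing Implicit Defensive.
Import Order.TTheory GRing.Theory Num.Theory.
Import numFieldNormedType.Exports.
Local Open Scope classical_set_scope.
Local Open Scope ring_scope.

Section Baire2.
Variable R : realType.

Lemma openR (A : set R) :
  (forall x, A x -> exists2 d, 0 < d & forall y, `|x - y| < d -> A y) -> open A.
Proof.
move=> H; rewrite openE => x Ax; rewrite /interior; apply/nbhs_ballP.
have [d d0 Hd] := H x Ax; exists d => // y; rewrite -ball_normE /ball_ /=.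
Qed.

Lemma openR_ball (A : set R) x : open A -> A x ->
  exists2 d, 0 < d & forall y, `|x - y| < d -> A y.
Proof.
move=> oA Ax; have : nbhs x A by apply: open_nbhs_nbhs.
move/nbhs_ballP => [d d0 Hd]; exists d => // y Hy; exact: Hd.
Qed.

Lemma denseR (S : set R) :
  (forall x d, 0 < d -> exists y, `|x - y| < d /\ S y) -> dense S.
Proof.
move=> H O [x Ox] oO; have [d d0 Hd] := openR_ball oO Ox.
have [y [xy Sy]] := H x d d0; exists y; split => //; exact: Hd.
Qed.

Lemma dense_ball (S : set R) x d : dense S -> 0 < d ->
  exists y, `|x - y| < d /\ S y.
Proof.
move=> dS d0.
have oB : open [set y | `|x - y| < d].
  apply: openR => y xy; exists (d - `|x - y|); first by rewrite subr_gt0.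
  move=> z /= yz; rewrite /=; have H := ler_normD (x - y) (y - z).
  rewrite addrA subrK in H; lra.
have xB : [set y | `|x - y| < d] x by rewrite /= subrr normr0.
have [y [/= xy Sy]] := dS _ (ex_intro _ x xB) oB.
by exists y.
Qed.


Lemma min2 (d1 d2 : R) : 0 < d1 -> 0 < d2 -> exists2 d, 0 < d & d <= d1 /\ d <= d2.
Proof.
move=> h1 h2; exists (Num.min d1 d2); first by rewrite lt_min h1 h2.
by split; rewrite ge_min lexx ?orbT.
Qed.

Lemma normlt (x d : R) : `|x| < d -> - d < x /\ x < d.
Proof. by rewrite ltr_norml => /andP. Qed.

Lemma normle (x d : R) : `|x| <= d -> - d <= x /\ x <= d.
Proof. by rewrite ler_norml => /andP. Qed.

Lemma tri (x y z : R) : `|x - z| <= `|x - y| + `|y - z|.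
Proof. exact: ler_distD. Qed.

Variables (g : R -> R -> R) (r : R).
Hypothesis r0 : 0 < r.
Hypothesis Hs : forall s t, `|s| < r -> `|t| < r -> forall e, 0 < e ->
  exists2 d, 0 < d & forall s', `|s' - s| < d -> `|g s' t - g s t| < e.
Hypothesis Ht : forall s t, `|s| < r -> `|t| < r -> forall e, 0 < e ->
  exists2 d, 0 < d & forall t', `|t' - t| < d -> `|g s t' - g s t| < e.

Lemma dense_step e a b : 0 < e -> a < b -> - r < a -> b < r ->
  exists x1, (a < x1 /\ x1 < b) /\ exists2 d, 0 < d &
    forall s1 s2 t1 t2, `|s1 - x1| < d -> `|s2 - x1| < d -> `|t1| < d -> `|t2| < d ->
      `|g s1 t1 - g s2 t2| <= e.
Proof.
move=> e0 ab ra br.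
pose tau (M : nat) := r / (M.+2)%:R.
have tau_gt0 M : 0 < tau M by rewrite divr_gt0 // ltr0n.
have tau_lt M : tau M < r.
  rewrite /tau ltr_pdivrMr ?ltr0n // -[X in X < _]mulr1 ltr_pM2l //.
  by rewrite (_ : 1 = 1%:R) // ltr_nat.
pose W M := [set s : R | s < a \/ b < s \/
  ((a < s /\ s < b) /\ exists t, `|t| <= tau M /\ e / 4 < `|g s t - g s 0|)].
have oW M : open (W M).
  apply: openR => s [sa|[bs|[[sa sb] [t [tt gt]]]]].
  - exists (a - s); first by rewrite subr_gt0.
    by move=> y /normlt [h1 h2]; left; lra.
  - exists (s - b); first by rewrite subr_gt0.
    by move=> y /normlt [h1 h2]; right; left; lra.
  - have sr : `|s| < r by rewrite ltr_norml; apply/andP; lra.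
    have trr : `|t| < r by apply: le_lt_trans tt (tau_lt M).
    have t0r : `|0 : R| < r by rewrite normr0.
    set c := `|g s t - g s 0| - e / 4.
    have c0 : 0 < c / 2 by rewrite divr_gt0 // subr_gt0.
    have [d1 d10 H1] := Hs sr trr c0.
    have [d2 d20 H2] := Hs sr t0r c0.
    have [d3 d30 [d31 d32]] := min2 d10 d20.
    have sa' : 0 < s - a by rewrite subr_gt0.
    have sb' : 0 < b - s by rewrite subr_gt0.
    have [d4 d40 [d41 d42]] := min2 sa' sb'.
    have [d d0 [dd3 dd4]] := min2 d30 d40.
    exists d => // y /normlt [h1 h2]; right; right; split; first by split; lra.
    exists t; split => //.
    have T1 := tri (g s t) (g y t) (g s 0).
    have T2 := tri (g y t) (g y 0) (g s 0).
    have E : `|g s t - g y t| = `|g y t - g s t| := distrC _ _.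
    have A : `|g y 0 - g s 0| < c / 2.
      by apply: H2; rewrite ltr_norml; apply/andP; lra.
    have B : `|g y t - g s t| < c / 2.
      by apply: H1; rewrite ltr_norml; apply/andP; lra.
    rewrite /c in A B; lra.
have notall : ~ (forall M, dense (W M)).
  move=> H; have := Baire (fun M => conj (oW M) (H M)).
  have ba : 0 < (b - a) / 2 by rewrite divr_gt0 // subr_gt0.
  move=> /(@dense_ball _ ((a + b) / 2) ((b - a) / 2)) /(_ ba) [y [/normlt [h1 h2] Wy]].
  have yr : `|y| < r by rewrite ltr_norml; apply/andP; lra.
  have t0r : `|0 : R| < r by rewrite normr0.
  have e4 : 0 < e / 4 by rewrite divr_gt0.
  have [dt dt0 Hdt] := Ht yr t0r e4.
  have rdt : 0 <= r / dt by rewrite divr_ge0 // ltW.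
  set M := Num.Def.archi_bound (r / dt).
  have := archi_boundP rdt; rewrite -/M => HM.
  have tM : tau M < dt.
    rewrite /tau ltr_pdivrMr ?ltr0n // mulrC -ltr_pdivrMr //.
    apply: lt_trans HM _; rewrite ltr_nat; by [].
  case: (Wy M I) => [h|[h|[_ [t [tt gt]]]]]; try lra.
  have /Hdt : `|t - 0| < dt by rewrite subr0; apply: le_lt_trans tt tM.
  lra.
move/existsNP: notall => [M nd].
have [Op [[x1 [oO Ox1]] OW]] := denseNE nd.
have nW y : Op y -> ~ W M y.
  move=> Oy Wy; have : (Op `&` W M) y by split.
  by rewrite OW.
have [r1 r10 Hr1] := openR_ball oO Ox1.
have inab y : `|x1 - y| < r1 / 2 -> a < y /\ y < b.
  move=> /normlt [h1 h2].
  have z1 : `|x1 - (y - r1 / 2)| < r1 by rewrite ltr_norml; apply/andP; lra.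
  have z2 : `|x1 - (y + r1 / 2)| < r1 by rewrite ltr_norml; apply/andP; lra.
  have := nW _ (Hr1 _ z1); have := nW _ (Hr1 _ z2).
  rewrite /W /=.
  case: (ltP (y - r1 / 2) a) => h3; first by move=> _ []; left.
  case: (ltP b (y + r1 / 2)) => h4; first by move=> [];right; left.
  move=> _ _; lra.
have good y t : `|x1 - y| < r1 / 2 -> `|t| <= tau M -> `|g y t - g y 0| <= e / 4.
  move=> xy tt; have [ay yb] := inab y xy.
  rewrite leNgt; apply/negP => gt.
  have xy' : `|x1 - y| < r1 by apply: lt_trans xy _; rewrite ltr_pdivrMr // ltr_pMr // ltr1n.
  by apply: (nW _ (Hr1 _ xy')); right; right; split => //; exists t.
have x1ab : a < x1 /\ x1 < b by apply: inab; rewrite subrr normr0 divr_gt0.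
have x1r : `|x1| < r by rewrite ltr_norml; apply/andP; lra.
have t0r : `|0 : R| < r by rewrite normr0.
have e4 : 0 < e / 4 by rewrite divr_gt0.
have [r2 r20 Hr2] := Hs x1r t0r e4.
have [d1 d10 [d11 d12]] := min2 (divr_gt0 r10 (ltr0n _ 2)) r20.
have [d d0 [dd1 dd2]] := min2 d10 (tau_gt0 M).
exists x1; split => //; exists d => // s1 s2 t1 t2 h1 h2 h3 h4.
have x1s1 : `|x1 - s1| < r1 / 2 by rewrite distrC; lra.
have x1s2 : `|x1 - s2| < r1 / 2 by rewrite distrC; lra.
have g1 := good s1 t1 x1s1 (ltW (lt_le_trans h3 dd2)).
have g2 := good s2 t2 x1s2 (ltW (lt_le_trans h4 dd2)).
have q1 : `|g s1 0 - g x1 0| < e / 4 by apply: Hr2; lra.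
have q2 : `|g s2 0 - g x1 0| < e / 4 by apply: Hr2; lra.
have T1 := tri (g s1 t1) (g s1 0) (g s2 t2).
have T2 := tri (g s1 0) (g x1 0) (g s2 t2).
have T3 := tri (g x1 0) (g s2 0) (g s2 t2).
have E1 : `|g x1 0 - g s2 0| = `|g s2 0 - g x1 0| := distrC _ _.
have E2 : `|g s2 0 - g s2 t2| = `|g s2 t2 - g s2 0| := distrC _ _.
lra.
Qed.


Lemma sep_joint rho : 0 < rho -> exists s0, `|s0| < rho /\
  forall e, 0 < e -> exists2 d, 0 < d &
    forall s t, `|s - s0| < d -> `|t| < d -> `|g s t - g s0 0| <= e.
Proof.
move=> rho0.
have r4 : 0 < r / 4 by rewrite divr_gt0.
have [rh rh0 [rh1 rh2]] := min2 rho0 r4.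
pose O (N : nat) := [set s : R | rh / 2 < `|s| \/ exists2 d, 0 < d &
  forall s1 s2 t1 t2, `|s1 - s| < d -> `|s2 - s| < d -> `|t1| < d -> `|t2| < d ->
    `|g s1 t1 - g s2 t2| <= (N.+1%:R)^-1].
have oO N : open (O N).
  apply: openR => s [hs|[d d0 Hd]].
  - exists (`|s| - rh / 2); first by rewrite subr_gt0.
    move=> y sy; left; have := tri s y 0; rewrite !subr0; lra.
  - exists (d / 2); first by rewrite divr_gt0.
    move=> y sy; right; exists (d / 2); first by rewrite divr_gt0.
    move=> s1 s2 t1 t2 h1 h2 h3 h4; apply: Hd.
    + have := tri s1 y s; rewrite (distrC y s); lra.
    + have := tri s2 y s; rewrite (distrC y s); lra.
    + lra.
    + lra.
have dO N : dense (O N).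
  apply: denseR => x d0 d00.
  have [hx|hx] := ltP (rh / 2) `|x|; first by exists x; rewrite subrr normr0; split => //; left.
  have [d1 d10 [d11 d12]] := min2 d00 r4.
  have [a1 b1] := normle hx.
  have eN : 0 < (N.+1%:R : R)^-1 by rewrite invr_gt0 ltr0n.
  have [|||x1 [[h1 h2] [d dpos Hd]]] := dense_step eN (a := x - d1) (b := x + d1); try lra.
  exists x1; split; first by rewrite ltr_norml; apply/andP; lra.
  by right; exists d.
have := Baire (fun N => conj (oO N) (dO N)).
have rh20 : 0 < rh / 2 by rewrite divr_gt0.
move=> /(@dense_ball _ 0 (rh / 2)) /(_ rh20) [s0 [hs0 Hs0]].
rewrite sub0r normrN in hs0.
exists s0; split; first lra.
move=> e e0.
have ie : 0 <= e^-1 by rewrite invr_ge0 ltW.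
set N := Num.Def.archi_bound (e^-1).
have := archi_boundP ie; rewrite -/N => HN.
have [|[d d0 Hd]] := Hs0 N I; first lra.
exists d => // s t h1 h2.
apply: le_trans (Hd s s0 t 0 h1 _ h2 _) _; rewrite ?subrr ?normr0 //.
rewrite -[e]invrK lef_pV2 ?posrE ?ltr0n ?invr_gt0 //.
apply: ltW; apply: lt_trans HN _; by rewrite ltr_nat.
Qed.

End Baire2.

Section Clairaut.
Variable R : realType.

Lemma contR (g : R -> R) s : {for s, continuous g} ->
  forall e, 0 < e -> exists2 d, 0 < d & forall s', `|s' - s| < d -> `|g s' - g s| < e.
Proof.
move=> cg e e0.
have [d d0 Hd] := (nbhs_ballP _ _).1 ((cvgrPdist_lt _ _).1 cg e e0).
exists d => // s' ss.
rewrite distrC; apply: Hd; rewrite -ball_normE /ball_ /= distrC //.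
Qed.

Lemma near0'E (P : R -> Prop) :
  (\forall t \near 0^', P t) <-> exists2 d, 0 < d & forall t, t != 0 -> `|t| < d -> P t.
Proof.
rewrite near_withinE; split.
  move=> /(nbhs_ballP _ _).1 [d d0 Hd]; exists d => // t t0 td; apply: Hd => //.
  by rewrite -ball_normE /ball_ /= sub0r normrN.
move=> [d d0 Hd]; apply/(nbhs_ballP _ _).2; exists d => // t.
rewrite -ball_normE /ball_ /= sub0r normrN => td t0; exact: Hd.
Qed.

Lemma lim_le_near (Q : R -> R) L c k :
  Q @ 0^' --> L ->
  (exists2 d, 0 < d & forall t, t != 0 -> `|t| < d -> `|Q t - c| <= k) ->
  `|L - c| <= k.
Proof.
move=> QL [d d0 Hd]; rewrite leNgt; apply/negP => H.
have ee : 0 < `|L - c| - k by rewrite subr_gt0.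
have [d' d'0 Hd'] := (near0'E _).1 ((cvgrPdist_lt _ _).1 QL _ ee).
have [d2 d20 [d21 d22]] := min2 d0 d'0.
have t0 : d2 / 2 != 0 by rewrite gt_eqF // divr_gt0.
have tl : `|d2 / 2| < d2 by rewrite gtr0_norm ?divr_gt0 // ltr_pdivrMr // ltr_pMr // ltr1n.
have A := Hd _ t0 (lt_le_trans tl d21).
have B := Hd' _ t0 (lt_le_trans tl d22).
have := tri L (Q (d2 / 2)) c; lra.
Qed.

Lemma MVT2 (F dF : R -> R) (a b : R) :
  (forall x, `|x - a| <= `|b - a| -> is_derive x 1 F (dF x)) ->
  exists c, `|c - a| <= `|b - a| /\ F b - F a = dF c * (b - a).
Proof.
move=> HF.
have [ab|ba] := leP a b.
  have nb : `|b - a| = b - a by rewrite ger0_norm // subr_ge0.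
  have HF' x : a <= x -> x <= b -> is_derive x 1 F (dF x).
    by move=> h1 h2; apply: HF; rewrite nb ler_norml; apply/andP; split; lra.
  have cF : {within `[a, b], continuous F}.
    apply: derivable_within_continuous => x; rewrite in_itv /= => /andP [h1 h2].
    by have [] := HF' x h1 h2.
  have Hd x : x \in `]a, b[ -> is_derive x 1 F (dF x).
    by rewrite in_itv /= => /andP [h1 h2]; apply: HF'; lra.
  have [c] := MVT_segment ab Hd cF.
  rewrite in_itv /= => /andP [h1 h2] E; exists c; split => //.
  by rewrite nb ler_norml; apply/andP; split; lra.
have nb : `|b - a| = a - b by rewrite ltr0_norm ?subr_lt0 // opprB.
have HF' x : b <= x -> x <= a -> is_derive x 1 F (dF x).
  by move=> h1 h2; apply: HF; rewrite nb ler_norml; apply/andP; split; lra.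
have cF : {within `[b, a], continuous F}.
  apply: derivable_within_continuous => x; rewrite in_itv /= => /andP [h1 h2].
  by have [] := HF' x h1 h2.
have Hd x : x \in `]b, a[ -> is_derive x 1 F (dF x).
  by rewrite in_itv /= => /andP [h1 h2]; apply: HF'; lra.
have [c] := MVT_segment (ltW ba) Hd cF.
rewrite in_itv /= => /andP [h1 h2] E; exists c; split.
  by rewrite nb ler_norml; apply/andP; split; lra.
have -> : F b - F a = - (F a - F b) by rewrite opprB.
by rewrite E -mulrN opprB.
Qed.

Section Line.
Variable V : normedModType R.

Lemma line_is_derive (f : V -> R) (x v : V) (s : R) :
  derivable f (x + s *: v) v ->
  is_derive s 1 (fun s' : R => f (x + s' *: v)) ('D_v f (x + s *: v)).
Proof.
move=> df.
have E : (fun h : R => h^-1 *: (((fun s' : R => f (x + s' *: v)) \o shift s) (h *: 1)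
            - f (x + s *: v))) =
         (fun h => h^-1 *: ((f \o shift (x + s *: v)) (h *: v) - f (x + s *: v))).
  apply/funext => h /=.
  have -> : x + (h *: (1 : R) + s) *: v = h *: v + (x + s *: v).
    by rewrite [h *: (1:R)]mulr1 scalerDl addrCA.
  by [].
have D : derivable (fun s' : R => f (x + s' *: v)) s 1 by rewrite /derivable E.
by apply: DeriveDef => //; rewrite /derive E.
Qed.

Lemma line_cont (f : V -> R) (x v : V) (s : R) :
  derivable f (x + s *: v) v ->
  forall e, 0 < e -> exists2 d, 0 < d & forall s', `|s' - s| < d ->
    `|f (x + s' *: v) - f (x + s *: v)| < e.
Proof.
move=> /line_is_derive [D _].
have := differentiable_continuous ((derivable1_diffP _ _).1 D).
by move=> /contR.
Qed.




Lemma line_cvg (f : V -> R) (x w : V) : derivable f x w ->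
  (fun t : R => t^-1 *: (f (x + t *: w) - f x)) @ 0^' --> 'D_w f x.
Proof.
move=> H.
have -> : (fun t : R => t^-1 *: (f (x + t *: w) - f x)) =
   (fun h => h^-1 *: ((f \o shift x) (h *: w) - f x)).
  by apply: funext => t /=; rewrite [t *: w + x]addrC.
exact: H.
Qed.

Lemma is_derive_sub (F1 F2 : R -> R) (x d1 d2 : R) :
  is_derive x 1 F1 d1 -> is_derive x 1 F2 d2 ->
  is_derive x 1 (fun y => F1 y - F2 y) (d1 - d2).
Proof. by move=> H1 H2; have := @is_deriveB _ _ _ F1 F2 x 1 d1 d2 H1 H2. Qed.

Lemma clairaut (f : V -> R) (U : set V) (u v w : V) :
  open U -> U u ->
  (forall x, U x -> derivable f x v) ->
  (forall x, U x -> derivable f x w) ->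
  (forall x, U x -> derivable ('D_v f) x w) ->
  (forall x, U x -> derivable ('D_w ('D_v f)) x v) ->
  (forall x, U x -> derivable ('D_w ('D_v f)) x w) ->
  derivable ('D_v ('D_w f)) u v ->
  'D_v ('D_w f) u = 'D_w ('D_v f) u.
Proof.
move=> oU Uu Hfv Hfw HG HGv HGw HH.
set G := 'D_w ('D_v f).
have [eps eps0 Heps] : exists2 eps, 0 < eps & forall y, `|u - y| < eps -> U y.
  have := open_nbhs_nbhs (conj oU Uu).
  move=> /(nbhs_ballP _ _).1 [eps eps0 H]; exists eps => // y uy; apply: H; by rewrite -ball_normE /ball_ /=.
pose K := `|v| + `|w| + 1.
have K0 : 0 < K by rewrite /K; have := normr_ge0 v; have := normr_ge0 w; lra.
pose r := eps / (2 * K).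
have r0 : 0 < r by rewrite divr_gt0 // mulr_gt0.
have rK : r * K = eps / 2 by rewrite /r; field; rewrite gt_eqF.
pose Pv s := u + s *: v.
pose P s t := Pv s + t *: w.
have P0 s : P s 0 = Pv s by rewrite /P scale0r addr0.
have inU s t : `|s| <= r -> `|t| <= r -> U (P s t).
  move=> hs ht; apply: Heps.
  have -> : u - P s t = - (s *: v + t *: w).
    by rewrite /P /Pv -addrA opprD addrA subrr add0r.
  rewrite normrN; apply: le_lt_trans (ler_normD _ _) _; rewrite !normrZ.
  have h1 : `|s| * `|v| <= r * `|v| by apply: ler_wpM2r.
  have h2 : `|t| * `|w| <= r * `|w| by apply: ler_wpM2r.
  have h3 : r * K = r * `|v| + r * `|w| + r by rewrite /K; ring.
  lra.
have inU' s t : `|s| < r -> `|t| < r -> U (P s t).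
  by move=> hs ht; apply: inU; apply: ltW.
pose g s t := G (P s t).
have Hs : forall s t, `|s| < r -> `|t| < r -> forall e, 0 < e ->
    exists2 d, 0 < d & forall s', `|s' - s| < d -> `|g s' t - g s t| < e.
  move=> s t hs ht e e0.
  have E s' : P s' t = (u + t *: w) + s' *: v by rewrite /P /Pv addrAC.
  have D : derivable G ((u + t *: w) + s *: v) v by rewrite -E; apply: HGv; apply: inU'.
  have [d d0 Hd] := line_cont D e0.
  exists d; first exact: d0.
  by move=> s' hs'; rewrite /g !E; apply: Hd.
have Ht : forall s t, `|s| < r -> `|t| < r -> forall e, 0 < e ->
    exists2 d, 0 < d & forall t', `|t' - t| < d -> `|g s t' - g s t| < e.
  move=> s t hs ht e e0.
  have D : derivable G (Pv s + t *: w) w by apply: HGw; apply: inU'.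
  have [d d0 Hd] := line_cont D e0.
  exists d; first exact: d0.
  by move=> t' ht'; apply: Hd.
have r2 : 0 < r / 2 by apply: divr_gt0.
have schwarz s0 : `|s0| < r / 2 ->
  (forall e, 0 < e -> exists2 d, 0 < d & forall s t, `|s - s0| < d -> `|t| < d ->
     `|g s t - g s0 0| <= e) ->
  'D_v ('D_w f) (Pv s0) = G (Pv s0).
  move=> hs0 J.
  apply: cvg_lim; first exact: norm_hausdorff.
  apply/cvgrPdist_le => e e0.
  have [d d0 Hd] := J e e0.
  have [d' d'0 [d'1 d'2]] := min2 d0 r2.
  apply/(near0'E _).2; exists d'; first exact: d'0.
  move=> h h0 hd.
  have Eh : h *: v + Pv s0 = Pv (s0 + h).
    by rewrite /Pv scalerDl addrCA [s0 *: v + h *: v]addrC.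
  rewrite /= Eh.
  set L := 'D_w f (Pv (s0 + h)) - 'D_w f (Pv s0).
  suff HL : `|L - h * G (Pv s0)| <= `|h| * e.
    have -> : G (Pv s0) - h^-1 *: L = - (h^-1 * (L - h * G (Pv s0))).
      by rewrite -[h^-1 *: L]/(h^-1 * L); field.
    rewrite normrN normrM normfV ler_pdivrMl ?normr_gt0; first exact: HL.
    exact: h0.
  have hsh : `|s0 + h| < r.
    have := ler_normD s0 h; lra.
  have Uh : U (Pv (s0 + h)) by rewrite -P0; apply: inU'; rewrite ?normr0.
  have U0 : U (Pv s0) by rewrite -P0; apply: inU'; rewrite ?normr0; lra.
  have C1 := line_cvg (Hfw _ Uh).
  have C2 := line_cvg (Hfw _ U0).
  have C := cvgB C1 C2.
  apply: (lim_le_near (Q := fun t => t^-1 *: (f (Pv (s0 + h) + t *: w) - f (Pv (s0 + h)))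
     - t^-1 *: (f (Pv s0 + t *: w) - f (Pv s0)))); first exact: C.
  exists d'; first exact: d'0.
  move=> t t0 td.
  have ht : `|t| < r by lra.
  have Esh : s0 + h - s0 = h by ring.
  pose F := fun s' : R => f (P s' t) - f (Pv s').
  pose dF := fun s' : R => 'D_v f (P s' t) - 'D_v f (Pv s').
  have HF (x : R) : `|x - s0| <= `|s0 + h - s0| -> is_derive x 1 F (dF x).
    rewrite Esh => hx.
    have hx' : `|x| < r.
      have := ler_normD (x - s0) s0; rewrite subrK; lra.
    apply: is_derive_sub.
    - have E s' : P s' t = (u + t *: w) + s' *: v by rewrite /P /Pv addrAC.
      have -> : (fun s' => f (P s' t)) = (fun s' : R => f ((u + t *: w) + s' *: v)).
        by apply: funext => s'; rewrite E.
      rewrite E; apply: line_is_derive; rewrite -E; apply: Hfv; exact: inU'.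
    - have U1 : U (Pv x).
        by rewrite -P0; apply: inU'; [exact: hx'|rewrite normr0; exact: r0].
      by apply: line_is_derive; apply: Hfv; exact: U1.
  have [xi [hxi Exi]] := MVT2 HF.
  rewrite Esh in hxi Exi.
  have hxir : `|xi| < r.
    have := ler_normD (xi - s0) s0; rewrite subrK; lra.
  pose F2 := fun t' : R => 'D_v f (P xi t').
  have HF2 (y : R) : `|y - 0| <= `|t - 0| -> is_derive y 1 F2 (G (P xi y)).
    rewrite !subr0 => hy.
    apply: line_is_derive; apply: HG; apply: inU'; [exact: hxir|lra].
  have [eta [heta Eeta]] := MVT2 HF2.
  rewrite !subr0 in heta Eeta.
  rewrite /F2 P0 in Eeta.
  rewrite /F /dF Eeta in Exi.
  have EQ : t^-1 *: (f (Pv (s0 + h) + t *: w) - f (Pv (s0 + h)))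
      - t^-1 *: (f (Pv s0 + t *: w) - f (Pv s0)) = h * G (P xi eta).
    transitivity (t^-1 * ((f (P (s0 + h) t) - f (Pv (s0 + h))) - (f (P s0 t) - f (Pv s0)))).
      by rewrite mulrBr.
    by rewrite Exi; field.
  rewrite EQ -mulrBr normrM ler_wpM2l ?normr_ge0 //.
  have := Hd xi eta; rewrite /g P0; apply; lra.
have Pv0 : Pv 0 = u by rewrite /Pv scale0r addr0.
have DH : derivable ('D_v ('D_w f)) (u + 0 *: v) v by rewrite scale0r addr0.
have DG : derivable G (u + 0 *: v) v by rewrite scale0r addr0; apply: HGv.
rewrite -Pv0; apply/eqP; rewrite -subr_eq0 -normr_eq0; apply/eqP.
set X := 'D_v ('D_w f) (Pv 0) - G (Pv 0).
suff HX : forall e, 0 < e -> `|X| < e.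
  apply/eqP; apply/negPn/negP => Hne.
  have Xp : 0 < `|X| by rewrite lt_def Hne normr_ge0.
  by have := HX _ Xp; rewrite ltxx.
move=> e e0.
have e2 : 0 < e / 2 by apply: divr_gt0.
have [dH dH0 HdH] := line_cont DH e2.
have [dG dG0 HdG] := line_cont DG e2.
have [d1 d10 [d11 d12]] := min2 dH0 dG0.
have [rho rho0 [rho1 rho2]] := min2 d10 r2.
have [s0 [hs0 J]] := sep_joint r0 Hs Ht rho0.
have S := schwarz s0 (lt_le_trans hs0 rho2) J.
have A : `|'D_v ('D_w f) (Pv s0) - 'D_v ('D_w f) (Pv 0)| < e / 2.
  apply: HdH; rewrite subr0; lra.
have B : `|G (Pv s0) - G (Pv 0)| < e / 2.
  apply: HdG; rewrite subr0; lra.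
rewrite S in A.
have T := tri ('D_v ('D_w f) (Pv 0)) (G (Pv s0)) (G (Pv 0)).
rewrite distrC in A.
rewrite /X; apply: le_lt_trans T _; rewrite [e]splitr; exact: ltrD A B.
Qed.

End Line.

End Clairaut.

Section Gen.
Variable R : realType.
Variable V : normedModType R.
Implicit Types (f g : V -> R) (x v : V).

Lemma derD' f g x v : derivable f x v -> derivable g x v ->
  derivable (fun y => f y + g y) x v.
Proof. exact: derivableD. Qed.
Lemma derB' f g x v : derivable f x v -> derivable g x v ->
  derivable (fun y => f y - g y) x v.
Proof. exact: derivableB. Qed.
Lemma derM' f g x v : derivable f x v -> derivable g x v ->
  derivable (fun y => f y * g y) x v.
Proof. exact: derivableM. Qed.
Lemma derC' (c : R) x v : derivable (fun _ : V => c) x v.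
Proof. exact: derivable_cst. Qed.
Lemma derV' f x v : f x != 0 -> derivable f x v -> derivable (fun y => (f y)^-1) x v.
Proof. exact: derivableV. Qed.

Lemma der_sum' (I : eqType) (r : seq I) (P : pred I) (F : I -> V -> R) x v :
  (forall i, P i -> derivable (F i) x v) ->
  derivable (fun y => \sum_(i <- r | P i) F i y) x v.
Proof.
move=> H; elim: r => [|a r IH].
  by under eq_fun do rewrite big_nil; exact: derC'.
under eq_fun do rewrite big_cons.
case Pa: (P a) => //.
by apply: derD' => //; apply: H.
Qed.

Lemma der_prod' (I : eqType) (r : seq I) (P : pred I) (F : I -> V -> R) x v :
  (forall i, P i -> derivable (F i) x v) ->
  derivable (fun y => \prod_(i <- r | P i) F i y) x v.
Proof.
move=> H; elim: r => [|a r IH].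
  by under eq_fun do rewrite big_nil; exact: derC'.
under eq_fun do rewrite big_cons.
case Pa: (P a) => //.
by apply: derM' => //; apply: H.
Qed.

Lemma deriveM' f g x v : derivable f x v -> derivable g x v ->
  'D_v (fun y => f y * g y) x = 'D_v f x * g x + f x * 'D_v g x.
Proof.
move=> df dg; have := deriveM df dg.
rewrite -[(fun y => f y * g y)]/(f * g) => ->.
by rewrite /GRing.scale /= addrC mulrC.
Qed.

Lemma deriveB' f g x v : derivable f x v -> derivable g x v ->
  'D_v (fun y => f y - g y) x = 'D_v f x - 'D_v g x.
Proof. by move=> df dg; have := deriveB df dg. Qed.

Lemma derive_sum' (I : eqType) (r : seq I) (P : pred I) (F : I -> V -> R) x v :
  (forall i, P i -> derivable (F i) x v) ->
  'D_v (fun y => \sum_(i <- r | P i) F i y) x = \sum_(i <- r | P i) 'D_v (F i) x.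
Proof.
move=> H; elim: r => [|a r IH].
  under eq_fun do rewrite big_nil; by rewrite big_nil derive_cst.
under eq_fun do rewrite big_cons.
rewrite big_cons; case Pa: (P a) => //.
rewrite deriveD //; [by rewrite IH|exact: H|exact: der_sum'].
Qed.

End Gen.

Section Coord.
Variables (R : realType) (n m : nat).
Local Notation V := 'rV[R]_n.
Local Notation W := 'rV[R]_m.

Lemma der_coord (F : V -> W) x v c : derivable F x v ->
  derivable (fun y => F y 0 c) x v.
Proof. by move/derivable_mxP => /(_ 0 c). Qed.

Lemma D_coord (F : V -> W) x v c : derivable F x v ->
  'D_v F x 0 c = 'D_v (fun y => F y 0 c) x.
Proof. by move=> dF; rewrite derive_mx // mxE. Qed.

Lemma dotvC (a b : W) : dotv a b = dotv b a.
Proof. by rewrite /dotv; apply: eq_bigr => k _; rewrite mulrC. Qed.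

Lemma dotvBl (a b c : W) : dotv (a - b) c = dotv a c - dotv b c.
Proof.
rewrite /dotv -sumrB; apply: eq_bigr => k _.
by rewrite !mxE mulrBl.
Qed.

Lemma dotv_suml (s : 'I_n -> R) (a : 'I_n -> W) (b : W) :
  dotv (\sum_k s k *: a k) b = \sum_k s k * dotv (a k) b.
Proof.
rewrite /dotv.
under eq_bigr do rewrite summxE big_distrl /=.
rewrite exchange_big /=; apply: eq_bigr => k _.
rewrite big_distrr /=; apply: eq_bigr => c _.
by rewrite mxE mulrA.
Qed.

Lemma der_dotv (F G : V -> W) x v : derivable F x v -> derivable G x v ->
  derivable (fun y => dotv (F y) (G y)) x v.
Proof.
move=> dF dG; apply: der_sum' => c _; apply: derM'; exact: der_coord.
Qed.

Lemma derive_dotv (F G : V -> W) x v : derivable F x v -> derivable G x v ->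
  'D_v (fun y => dotv (F y) (G y)) x = dotv ('D_v F x) (G x) + dotv (F x) ('D_v G x).
Proof.
move=> dF dG; rewrite /dotv derive_sum'; last first.
  by move=> c _; apply: derM'; exact: der_coord.
rewrite -big_split /=; apply: eq_bigr => c _.
rewrite deriveM'; try exact: der_coord.
by rewrite !D_coord.
Qed.

End Coord.

Section Main.
Variables (R : realType) (n m : nat) (U : set 'rV[R]_n)
  (phi : 'rV[R]_n -> 'rV[R]_m).
Hypotheses (oU : open U) (sm : smooth_on U phi)
  (rf : forall u, U u -> row_free (jac phi u)).
Local Notation V := 'rV[R]_n.
Local Notation W := 'rV[R]_m.

Definition good (f : V -> R) := forall x, U x -> forall i : 'I_n, derivable f x (ebas R i).

Lemma nearU x : U x -> \forall y \near x, U y.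
Proof. by move=> Ux; exact: (open_nbhs_nbhs (conj oU Ux)). Qed.

Lemma eqU_derive (T : normedModType R) (f g : V -> T) x v : U x ->
  (forall y, U y -> f y = g y) -> 'D_v f x = 'D_v g x.
Proof.
move=> Ux H; apply: near_eq_derive; apply: filterS (nearU Ux) => y Uy.
exact: H.
Qed.

Lemma eqU_derivable (T : normedModType R) (f g : V -> T) x v : U x ->
  (forall y, U y -> f y = g y) -> derivable f x v -> derivable g x v.
Proof.
move=> Ux H; apply: near_eq_derivable; apply: filterS (nearU Ux) => y Uy.
exact: H.
Qed.

Lemma smP s i u : U u -> derivable (Defs.iterD s phi) u (ebas R i).
Proof. exact: sm. Qed.

Lemma der_phi x i : U x -> derivable phi x (ebas R i).
Proof. by move=> Ux; exact: (@smP [::] i x Ux). Qed.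

Lemma der_dphi j x i : U x -> derivable (dphi phi j) x (ebas R i).
Proof. by move=> Ux; exact: (@smP [:: j] i x Ux). Qed.

Lemma der_ddphi k j x i : U x -> derivable (pd k (dphi phi j)) x (ebas R i).
Proof. by move=> Ux; exact: (@smP [:: k; j] i x Ux). Qed.

Lemma good_gmet i j : good (gmet phi i j).
Proof. by move=> x Ux k; apply: der_dotv; apply: der_dphi. Qed.

Lemma good_dotv_phi j : good (fun y => dotv (phi y) (dphi phi j y)).
Proof. by move=> x Ux k; apply: der_dotv; [apply: der_phi|apply: der_dphi]. Qed.

Lemma gmatE x : gmat phi x = jac phi x *m (jac phi x)^T.
Proof.
apply/matrixP => i j; rewrite !mxE /gmet /dotv; apply: eq_bigr => c _.
by rewrite !mxE.
Qed.

Lemma gmat_unit x : U x -> gmat phi x \in unitmx.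
Proof.
move=> Ux; rewrite -row_free_unit gmatE; apply: inj_row_free => w0 Hw.
set J := jac phi x.
have : (w0 *m J) *m (w0 *m J)^T = 0.
  by rewrite trmx_mul mulmxA -(mulmxA w0) Hw mul0mx.
move=> /(congr1 (fun M : 'M[R]_(1,1) => M 0 0)); rewrite !mxE => Hs.
have H0 : forall c, (w0 *m J) 0 c = 0.
  move=> c.
  have Hc : (w0 *m J) 0 c * (w0 *m J)^T c 0 = 0.
    apply: (psumr_eq0P (P := predT) _ Hs) => // k _.
    by rewrite [(w0 *m J)^T k 0]mxE -expr2 sqr_ge0.
  by move: Hc; rewrite [(w0 *m J)^T c 0]mxE => /eqP; rewrite mulf_eq0 orbb => /eqP.
have : w0 *m J == 0 by apply/eqP/rowP => c; rewrite H0 mxE.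
by rewrite mulmx_free_eq0 ?rf // => /eqP.
Qed.

Lemma good_ext (f g : V -> R) : (forall y, f y = g y) -> good f -> good g.
Proof. by move=> E; have -> : f = g by apply: funext. Qed.

Lemma good_det p (M : V -> 'M[R]_p) : (forall a b, good (fun y => M y a b)) ->
  good (fun y => \det (M y)).
Proof.
move=> H x Ux i; rewrite /determinant.
apply: der_sum' => s _; apply: derM'; first exact: derC'.
by apply: der_prod' => k _; apply: H.
Qed.

Lemma good_gmat a b : good (fun y => gmat phi y a b).
Proof. by apply: (good_ext (f := gmet phi a b)); [move=> y; rewrite mxE|exact: good_gmet]. Qed.

Lemma ginvE y : U y -> ginv phi y = (\det (gmat phi y))^-1 *: \adj (gmat phi y).
Proof. by move=> Uy; rewrite /ginv /invmx gmat_unit. Qed.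

Lemma good_ginv k l : good (fun y => ginv phi y k l).
Proof.
move=> x Ux i.
apply: (eqU_derivable (f := fun y => (\det (gmat phi y))^-1 * \adj (gmat phi y) k l) Ux).
  by move=> y Uy; rewrite (ginvE Uy) [in RHS]mxE.
apply: derM'.
  apply: derV'; first by rewrite -unitfE -unitmxE gmat_unit.
  by apply: good_det => // a b; exact: good_gmat.
apply: (eqU_derivable (f := fun y => (-1) ^+ (l + k) *
   \det (row' l (col' k (gmat phi y)))) Ux).
  by move=> y Uy; rewrite mxE.
apply: derM'; first exact: derC'.
apply: good_det => // a b.
by apply: (good_ext (f := fun y => gmat phi y (lift l a) (lift k b)));
  [move=> y; rewrite !mxE|exact: good_gmat].
Qed.

Lemma good_xTc k : good (xTc phi k).
Proof.
move=> x Ux i; apply: der_sum' => l _; apply: derM'.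
  exact: good_ginv.
exact: good_dotv_phi.
Qed.

Lemma gmetC i j y : gmet phi i j y = gmet phi j i y.
Proof. exact: dotvC. Qed.

Lemma sum_xTc_gmet y j : U y ->
  \sum_k xTc phi k y * gmet phi k j y = dotv (phi y) (dphi phi j y).
Proof.
move=> Uy; rewrite /xTc.
under eq_bigr do rewrite big_distrl /=.
rewrite exchange_big /=.
transitivity (\sum_l dotv (phi y) (dphi phi l y) * (gmat phi y *m ginv phi y) j l).
  apply: eq_bigr => l _; rewrite mxE big_distrr /=; apply: eq_bigr => k _.
  by rewrite !mxE gmetC; ring.
rewrite mulmxV ?gmat_unit //.
rewrite (bigD1 j) //= big1 ?addr0; first by rewrite mxE eqxx mulr1.
by move=> l lj; rewrite mxE eq_sym (negbTE lj) mulr0.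
Qed.

Lemma xN_perp y j : U y -> dotv (xN phi y) (dphi phi j y) = 0.
Proof.
move=> Uy; rewrite /xN dotvBl /xT dotv_suml.
by rewrite (sum_xTc_gmet j Uy) subrr.
Qed.

Lemma iterD_coord s c y : U y ->
  Defs.iterD s (fun z => phi z 0 c) y = Defs.iterD s phi y 0 c.
Proof.
elim: s y => [//|i s IH] y Uy /=.
rewrite /pd (eqU_derive (g := fun z => Defs.iterD s phi z 0 c) _ Uy IH).
by rewrite D_coord //; exact: smP.
Qed.

Lemma smooth_coord c s i y : U y ->
  derivable (Defs.iterD s (fun z => phi z 0 c)) y (ebas R i).
Proof.
move=> Uy; apply: (eqU_derivable (f := fun z => Defs.iterD s phi z 0 c) Uy).
  by move=> z Uz; rewrite iterD_coord.
by apply: der_coord; exact: smP.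
Qed.

Lemma ddphi_sym u i j : U u -> pd i (dphi phi j) u = pd j (dphi phi i) u.
Proof.
move=> Uu; apply/rowP => c.
have E1 := iterD_coord [:: i; j] c Uu.
have E2 := iterD_coord [:: j; i] c Uu.
transitivity (Defs.iterD [:: i; j] phi u 0 c); first reflexivity.
transitivity (Defs.iterD [:: j; i] phi u 0 c); last reflexivity.
have C : Defs.iterD [:: i; j] (fun z => phi z 0 c) u = Defs.iterD [:: j; i] (fun z => phi z 0 c) u.
  apply: (clairaut (f := fun z => phi z 0 c) (v := ebas R i) (w := ebas R j) oU Uu).
  - by move=> x Ux; exact: (@smooth_coord c [::] i x Ux).
  - by move=> x Ux; exact: (@smooth_coord c [::] j x Ux).
  - by move=> x Ux; exact: (@smooth_coord c [:: i] j x Ux).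
  - by move=> x Ux; exact: (@smooth_coord c [:: j; i] i x Ux).
  - by move=> x Ux; exact: (@smooth_coord c [:: j; i] j x Ux).
  - exact: (@smooth_coord c [:: i; j] i u Uu).
exact: (etrans (esym E1) (etrans C E2)).
Qed.

End Main.

Section Main2.
Variables (R : realType) (n m : nat) (U : set 'rV[R]_n)
  (phi : 'rV[R]_n -> 'rV[R]_m).
Hypotheses (oU : open U) (sm : smooth_on U phi)
  (rf : forall u, U u -> row_free (jac phi u)).
Local Notation V := 'rV[R]_n.
Local Notation W := 'rV[R]_m.

Lemma F1 u k i j : U u -> pd k (gmet phi i j) u =
  dotv (pd k (dphi phi i) u) (dphi phi j u) + dotv (dphi phi i u) (pd k (dphi phi j) u).
Proof.
move=> Uu; rewrite /pd /gmet.
by apply: derive_dotv; apply: (der_dphi sm).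
Qed.

Lemma F2 u i j : U u ->
  pd i (fun y => \sum_k xTc phi k y * gmet phi k j y) u =
  \sum_k (pd i (xTc phi k) u * gmet phi k j u + xTc phi k u * pd i (gmet phi k j) u).
Proof.
move=> Uu; rewrite /pd derive_sum'; last first.
  by move=> k _; apply: derM'; [exact: (good_xTc oU sm rf)|exact: (good_gmet sm)].
apply: eq_bigr => k _; rewrite deriveM' //.
  exact: (good_xTc oU sm rf).
exact: (good_gmet sm).
Qed.

Lemma F2b u i j : U u ->
  pd i (fun y => \sum_k xTc phi k y * gmet phi k j y) u =
  gmet phi i j u + dotv (phi u) (pd i (dphi phi j) u).
Proof.
move=> Uu; rewrite /pd.
rewrite (eqU_derive oU (g := fun y => dotv (phi y) (dphi phi j y)) _ Uu); last first.
  by move=> y Uy; exact: (sum_xTc_gmet rf).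
rewrite derive_dotv; [reflexivity|exact: (der_phi sm)|exact: (der_dphi sm)].
Qed.

Lemma der_xN x i : U x -> derivable (xN phi) x (ebas R i).
Proof.
move=> Ux; apply/derivable_mxP => a b.
have -> : (fun y => xN phi y a b) =
   (fun y => phi y 0 b - \sum_k xTc phi k y * dphi phi k y 0 b).
  apply: funext => y; rewrite (ord1 a) /xN /xT !mxE summxE.
  by congr (_ - _); apply: eq_bigr => k _; rewrite mxE.
apply: derB'; first by apply: der_coord; exact: (der_phi sm).
apply: der_sum' => k _; apply: derM'; first exact: (good_xTc oU sm rf).
by apply: der_coord; exact: (der_dphi sm).
Qed.

Lemma F3 u i j : U u ->
  dotv (pd i (xN phi) u) (dphi phi j u) + dotv (xN phi u) (pd i (dphi phi j) u) = 0.
Proof.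
move=> Uu; rewrite /pd -derive_dotv; last exact: (der_dphi sm).
  rewrite (eqU_derive oU (g := fun _ => 0 : R) _ Uu); first exact: derive_cst.
  by move=> y Uy; exact: (xN_perp rf).
exact: der_xN.
Qed.

End Main2.

Lemma key_alg (R : realType) (n : nat) (c Di Dj gkj gki gik Dg1 Dg2 Dg3 X Y Z : 'I_n -> R)
  (gij P XT shape : R) :
  (forall k, Dg1 k = X k + Y k) ->
  (forall k, Dg2 k = X k + Z k) ->
  (forall k, Dg3 k = Y k + Z k) ->
  \sum_k (Di k * gkj k + c k * Dg2 k) = gij + P ->
  \sum_k (Dj k * gki k + c k * Dg3 k) = gij + P ->
  \sum_k c k * Z k = XT ->
  (forall k, gik k = gki k) ->
  shape = P - XT ->
  2^-1 * \sum_k (c k * Dg1 k + gkj k * Di k + gik k * Dj k) = gij + shape.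
Proof.
move=> h1 h2 h3 S1 S2 S3 hg hsh.
have E : \sum_k (c k * Dg1 k + gkj k * Di k + gik k * Dj k) =
  \sum_k ((Di k * gkj k + c k * Dg2 k) + (Dj k * gki k + c k * Dg3 k) - 2 * (c k * Z k)).
  by apply: eq_bigr => k _; rewrite h1 h2 h3 hg; ring.
rewrite E sumrB big_split /= -mulr_sumr S1 S2 S3 hsh.
by field; rewrite ?pnatr_eq0.
Qed.

Lemma neg_sum (R : realType) (a b : R) : a + b = 0 -> - a = b.
Proof. by move=> /eqP; rewrite addrC addr_eq0 => /eqP ->. Qed.

Section Main3.
Variables (R : realType) (n m : nat) (U : set 'rV[R]_n)
  (phi : 'rV[R]_n -> 'rV[R]_m).
Hypotheses (oU : open U) (sm : smooth_on U phi)
  (rf : forall u, U u -> row_free (jac phi u)).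

Lemma key u i j : U u ->
  2^-1 * lieg phi i j u = gmet phi i j u + shapeN phi i j u.
Proof.
move=> Uu.
have sym a b : pd a (dphi phi b) u = pd b (dphi phi a) u := ddphi_sym oU sm a b Uu.
apply: (@key_alg R n (fun k => xTc phi k u) (fun k => pd i (xTc phi k) u)
  (fun k => pd j (xTc phi k) u) (fun k => gmet phi k j u) (fun k => gmet phi k i u)
  (fun k => gmet phi i k u) (fun k => pd k (gmet phi i j) u)
  (fun k => pd i (gmet phi k j) u) (fun k => pd j (gmet phi k i) u)
  (fun k => dotv (pd i (dphi phi k) u) (dphi phi j u))
  (fun k => dotv (pd j (dphi phi k) u) (dphi phi i u))
  (fun k => dotv (dphi phi k u) (pd i (dphi phi j) u))
  (gmet phi i j u) (dotv (phi u) (pd i (dphi phi j) u))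
  (dotv (xT phi u) (pd i (dphi phi j) u)) (shapeN phi i j u)).
- move=> k.
  exact: (etrans (F1 sm k i j Uu) (f_equal2 +%R
     (f_equal (fun a => dotv a (dphi phi j u)) (sym k i))
     (etrans (f_equal (dotv (dphi phi i u)) (sym k j)) (dotvC _ _)))).
- by move=> k; exact: (F1 sm i k j Uu).
- move=> k.
  exact: (etrans (F1 sm j k i Uu)
    (f_equal (fun z => dotv (pd j (dphi phi k) u) (dphi phi i u) + z)
       (f_equal (dotv (dphi phi k u)) (sym j i)))).
- exact: (etrans (esym (F2 oU sm rf i j Uu)) (F2b oU sm rf i j Uu)).
- exact: (etrans (etrans (esym (F2 oU sm rf j i Uu)) (F2b oU sm rf j i Uu))
     (f_equal2 +%R (gmetC phi j i u) (f_equal (dotv (phi u)) (sym j i)))).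
- exact: (esym (dotv_suml _ _ _)).
- by move=> k; exact: gmetC.
- exact: (etrans (neg_sum (F3 oU sm rf i j Uu)) (dotvBl _ _ _)).
Qed.

End Main3.

Lemma iff_alg (R : realType) (hL br gm g dX S : R) : hL = g + S ->
  (hL + br = gm * g + dX <-> br = (gm - 1) * g + dX - S).
Proof. by move=> ->; split => H; lra. Qed.

Unset Implicit Arguments. Set Strict Implicit. Set Printing Implicit Defensive.

Theorem theorem5p2 (R : realType) (n m : nat) (U : set 'rV[R]_n)
  (phi : 'rV[R]_n -> 'rV[R]_m) (beta gamma delta : 'rV[R]_n -> R) :
  open U ->
  smooth_on U phi ->
  (forall u, U u -> row_free (jac phi u)) ->
  smooth_on U beta -> smooth_on U gamma -> smooth_on U delta ->
  ((forall u, U u -> forall i j : 'I_n,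
      2^-1 * lieg phi i j u + beta u * ricci phi i j u
      = gamma u * gmet phi i j u + delta u * (xTflat phi i u * xTflat phi j u))
   <->
   (forall u, U u -> forall i j : 'I_n,
      beta u * ricci phi i j u
      = (gamma u - 1) * gmet phi i j u + delta u * (xTflat phi i u * xTflat phi j u)
        - shapeN phi i j u)).
Proof.
move=> oU sm rf _ _ _.
split=> H u Uu i j.
  by apply/(iff_alg _ _ _ (key oU sm rf i j Uu)); exact: H.
by apply/(iff_alg _ _ _ (key oU sm rf i j Uu)); exact: H.
Qed.
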